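(* Let $G$ be a finite group. The graph $\mathcal{P}^*(G)/\mathtt{T}$ is a tame quotient of $\mathcal{P}^*(G)$ if and only if, for all $x,y\in G\setminus\{1\}$, $x\mathtt{T}y$ implies $x\mathtt{N}y$.
   Context: The power graph $\mathcal{P}(G)$ has vertex set $G$, distinct $x,y$ adjacent iff one is a positive integer power of the other; $\mathcal{P}^*(G)$ is its subgraph induced on $G\setminus\{1\}$. $x\mathtt{N}y$ (closed twins) iff $x,y$ have the same closed neighbourhood; $x\mathtt{O}y$ (open twins) iff they have the same open neighbourhood; $x\mathtt{T}y$ (twins) iff $x\mathtt{N}y$ or $x\mathtt{O}y$ (an equivalence relation). For a graph $\Gamma$ and equivalence $\sim$ on its vertices, $\Gamma/\sim$ has vertex set the classes, classes joined iff some representatives are joined; the quotient is tame if $[x]=[y]$ implies $x$ and $y$ are joined by a path in $\Gamma$. *)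

(* Defs.v *)
From mathcomp Require Import all_boot all_fingroup.
Set Implicit Arguments. Unset Strict Implicit. Unset Printing Implicit Defensive.
Local Open Scope group_scope.

Section Graphs.
Variables (T : Type) (V : T -> Prop) (adj : T -> T -> Prop).

Definition open_twins (x y : T) : Prop :=
  forall z, V z -> (adj x z <-> adj y z).

Definition closed_twins (x y : T) : Prop :=
  forall z, V z -> ((z = x \/ adj x z) <-> (z = y \/ adj y z)).

(* the twin relation T = N ∪ O *)
Definition twins (x y : T) : Prop := closed_twins x y \/ open_twins x y.

Inductive walk : T -> T -> Prop :=
  | walk_nil x : V x -> walk x x
  | walk_cons x y z : adj x y -> walk y z -> walk x z.

Definition joined (x y : T) : Prop := V x /\ walk x y.

Definition tame_quotient (equiv : T -> T -> Prop) : Prop :=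
  forall x y, V x -> V y -> equiv x y -> joined x y.
End Graphs.

(** The power graph P(G) with G = the whole finite group gT, and P*(G). *)
Section PowerGraph.
Variable gT : finGroupType.

Definition power_adj (x y : gT) : Prop :=
  x <> y /\ ((exists n : nat, (0 < n)%N /\ y = x ^+ n) \/
             (exists n : nat, (0 < n)%N /\ x = y ^+ n)).

Definition pstar_vertex (x : gT) : Prop := x <> 1.

Definition pstar_adj (x y : gT) : Prop :=
  pstar_vertex x /\ pstar_vertex y /\ power_adj x y.
End PowerGraph.

(* Main.v *)
Require Import Defs.
From mathcomp Require Import all_boot all_fingroup.
From mathcomp Require Import all_solvable.
Local Open Scope group_scope.

Section Aux.
Variable gT : finGroupType.
Implicit Types x y w : gT.

Definition P x y := exists n : nat, (0 < n)%N /\ y = x ^+ n.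

Lemma L0 {x y k} : y = x ^+ k -> y <> 1 -> P x y.
Proof.
move=> -> H; case: k H => [|k] H; first by rewrite expg0 in H.
by exists k.+1.
Qed.

Lemma Linv {x y k} : y^-1 = x ^+ k -> y = x ^+ (#[x].-1 * k).
Proof.
move=> H; by rewrite expgnA -invg_expg expgVn -H invgK.
Qed.

Lemma Linv2 {x y k} : y = (x^-1) ^+ k -> y = x ^+ (#[x].-1 * k).
Proof. by move=> ->; rewrite expgnA -invg_expg. Qed.

Lemma invol_pow {x} a : x^-1 = x -> x ^+ a = 1 \/ x ^+ a = x.
Proof.
move=> Hx; elim: a => [|a [IH|IH]]; first by left; rewrite expg0.
- by right; rewrite expgS IH mulg1.
- by left; rewrite expgS IH -{1}Hx mulVg.
Qed.

Lemma step2 {x y} :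
  x <> 1 -> y <> 1 ->
  (forall z, z <> 1 -> pstar_adj x z -> pstar_adj y z) ->
  ~ P x y -> ~ P y x -> x^-1 = x.
Proof.
move=> x1 y1 H nxy nyx; apply/eqP; apply/negPn/negP => /eqP hne.
have xi1 : x^-1 <> 1 by move=> /eqP; rewrite invg_eq1 => /eqP.
have : pstar_adj x x^-1.
  split=> //; split=> //; split; first by move=> E; apply: hne; rewrite -E.
  left; apply: (L0 (invg_expg x)) xi1.
move=> /(H _ xi1) [_ [_ [_ [[m [_ Hm]]|[m [_ Hm]]]]]].
- apply: nyx; exact: (L0 (Linv Hm)).
- apply: nxy; exact: (L0 (Linv2 Hm)).
Qed.

Lemma order2 {x} : x <> 1 -> x^-1 = x -> #[x] = 2%N.
Proof.
move=> x1 Hx.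
have h1 : (1 < #[x])%N by rewrite order_gt1; apply/eqP.
have h2 : (#[x] %| 2)%N by rewrite order_dvdn expgS expg1 -{1}Hx mulVg.
have := dvdn_leq (isT : (0 < 2)%N) h2.
by case: #[x] h1 h2 => [|[|[|]]].
Qed.

Lemma main_contra {x y w} :
  x <> 1 -> y <> 1 -> x <> y ->
  open_twins (@pstar_vertex gT) (@pstar_adj gT) x y ->
  pstar_adj x w -> False.
Proof.
move=> x1 y1 nxy OT Axw.
have nPxy : ~ P x y.
  move=> Pxy; have : pstar_adj x y by split=> //; split=> //; split=> //; left.
  by move=> /(proj1 (OT y y1)) [_ [_ [? _]]].
have nPyx : ~ P y x.
  move=> Pyx; have : pstar_adj y x
    by split=> //; split=> //; split=> //; [move=> E; apply nxy | left].
  by move=> /(proj2 (OT x x1)) [_ [_ [? _]]].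
have ix : x^-1 = x by apply: (step2 x1 y1) => // z z1 /(proj1 (OT z z1)).
have iy : y^-1 = y by apply: (step2 y1 x1) => // z z1 /(proj2 (OT z z1)).
have w1 : w <> 1 by case: Axw => _ [].
have Ayw : pstar_adj y w by apply/(proj1 (OT w w1)).
case: Axw => _ [_ [nxw [[a [_ Ha]]|[a [_ Ha]]]]].
  by case: (invol_pow a ix) => E; [apply: w1 | apply: nxw]; rewrite Ha E.
case: Ayw => _ [_ [nyw [[b [_ Hb]]|[b [_ Hb]]]]].
  by case: (invol_pow b iy) => E; [apply: w1 | apply: nyw]; rewrite Hb E.
have : <[x]> == <[y]> :> {set gT}.
  rewrite (eq_subG_cyclic (cycle_cyclic w)) ?Ha ?Hb ?cycleX //.
  by rewrite -Ha -Hb -/#[x] -/#[y] (order2 x1 ix) (order2 y1 iy).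
move=> /eqP E.
have : x \in <[y]> by rewrite -E cycle_id.
case/cycleP => k Hk; apply: nPyx; exact: (L0 Hk).
Qed.

End Aux.

Theorem mainTheorem20 (gT : finGroupType) :
  tame_quotient (@pstar_vertex gT) (@pstar_adj gT)
    (twins (@pstar_vertex gT) (@pstar_adj gT))
  <->
  (forall x y : gT, x <> 1 -> y <> 1 ->
     twins (@pstar_vertex gT) (@pstar_adj gT) x y ->
     closed_twins (@pstar_vertex gT) (@pstar_adj gT) x y).
Proof.
split.
- move=> Htame x y x1 y1 [CT|OT]; first by [].
  have [exy|nxy] := eqVneq x y.
    by rewrite exy => z _; split.
  have [_ W] := Htame x y x1 y1 (or_intror OT).
  case: W x1 y1 nxy OT => [u _|u v z A _] x1 y1 nxy OT; first by rewrite eqxx in nxy.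
  exfalso; apply: (main_contra _ x1 y1 _ OT A); exact/eqP.
- move=> H x y x1 y1 T.
  have CT := H x y x1 y1 T.
  split=> //.
  case: (proj2 (CT y y1) (or_introl erefl)) => [->|A].
    by apply: walk_nil.
  apply: walk_cons A _; exact: walk_nil.
Qed.
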